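(* Let $n\geq 2$, $c\geq 2$, and let $L_{n,c}$ be the free metabelian nilpotent Lie algebra of nilpotency class $c$ generated by $x_1,\ldots,x_n$ over a field $K$ of characteristic zero. Let $u=\sum_{i=1}^n\alpha_ix_i$ with $\alpha_i\in K$ and let $v=\sum_{i=1}^n x_i$. If $[u,v]\in L_{n,c}^{S_n}$, then $u=\alpha v$ for some $\alpha\in K$.
   Context: $L_{n,c}=L_n/(L_n''+\gamma^{c+1}(L_n))$, where $L_n$ is the free Lie algebra on $x_1,\ldots,x_n$, $\gamma^1(L_n)=L_n$, $\gamma^k(L_n)=[\gamma^{k-1}(L_n),L_n]$, and $L_n''=[L_n',L_n']$ with $L_n'=[L_n,L_n]$. The symmetric group $S_n$ acts on $L_{n,c}$ by $\pi\, p(x_1,\ldots,x_n)=p(x_{\pi(1)},\ldots,x_{\pi(n)})$, and $L_{n,c}^{S_n}$ is the algebra of elements fixed by all $\pi\in S_n$ (symmetric polynomials). *)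

(* Defs.v *)
From HB Require Import structures.
From mathcomp Require Import all_boot all_order all_algebra all_fingroup.
Set Implicit Arguments. Unset Strict Implicit. Unset Printing Implicit Defensive.
Import GRing.Theory.
Local Open Scope ring_scope.

Definition is_lie (K : fieldType) (V : lmodType K) (br : V -> V -> V) : Prop :=
  [/\ (forall (k : K) a1 a2 b, br (k *: a1 + a2) b = k *: br a1 b + br a2 b),
      (forall (k : K) a b1 b2, br a (k *: b1 + b2) = k *: br a b1 + br a b2),
      (forall a, br a a = 0) &
      (forall a b c, br a (br b c) + br b (br c a) + br c (br a b) = 0)].

Definition metabelian (K : fieldType) (V : lmodType K) (br : V -> V -> V) : Prop :=
  forall a b c d, br (br a b) (br c d) = 0.

(* nilpotent of class <= c: gamma^{c+1}(L) = 0, i.e. every left-normed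
   commutator [a_0, a_1, ..., a_c] (c+1 entries) vanishes. *)
Definition nilp_class_le (K : fieldType) (V : lmodType K) (br : V -> V -> V)
  (c : nat) : Prop :=
  forall (a0 : V) (s : seq V), size s = c -> foldl br a0 s = 0.

Definition lie_hom (K : fieldType) (V W : lmodType K)
  (brV : V -> V -> V) (brW : W -> W -> W) (f : V -> W) : Prop :=
  (forall (k : K) a b, f (k *: a + b) = k *: f a + f b) /\
  (forall a b, f (brV a b) = brW (f a) (f b)).

(* (V, br, x) is the free metabelian nilpotent Lie algebra of class c on
   x_1..x_n, i.e. L_{n,c} = L_n / (L_n'' + gamma^{c+1}(L_n)): the free object
   on x in the variety of metabelian Lie algebras of nilpotency class <= c. *)
Definition free_metab_nilp (K : fieldType) (n c : nat) (V : lmodType K)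
  (br : V -> V -> V) (x : 'I_n -> V) : Prop :=
  [/\ is_lie br, metabelian br, nilp_class_le br c &
      forall (W : lmodType K) (brW : W -> W -> W) (y : 'I_n -> W),
        is_lie brW -> metabelian brW -> nilp_class_le brW c ->
        (exists f : V -> W, lie_hom br brW f /\ forall i, f (x i) = y i) /\
        (forall f g : V -> W, lie_hom br brW f -> lie_hom br brW g ->
           (forall i, f (x i) = y i) -> (forall i, g (x i) = y i) ->
           forall p, f p = g p)].

(* p is symmetric (p in L_{n,c}^{S_n}): fixed by the action of every
   pi in S_n, where pi acts as the Lie endomorphism x_i |-> x_{pi(i)}. *)
Definition symmetric_elt (K : fieldType) (n : nat) (V : lmodType K)
  (br : V -> V -> V) (x : 'I_n -> V) (p : V) : Prop :=
  forall (pi : 'S_n) (f : V -> V), lie_hom br br f ->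
    (forall i, f (x i) = x (pi i)) -> f p = p.

(* Main.v *)
Require Import Defs.
From HB Require Import structures.
From mathcomp Require Import all_boot all_order all_algebra all_fingroup.
From mathcomp Require Import ring.
Import GRing.Theory.
Local Open Scope ring_scope.

Section LH.
Context {K : fieldType} {V W : lmodType K} {brV : V -> V -> V} {brW : W -> W -> W}.

Lemma lh0 {f} : lie_hom brV brW f -> f 0 = 0.
Proof.
move=> [hl _]; have := hl 1 0 0; rewrite !scale1r addr0 => h.
by apply: (addrI (f 0)); rewrite addr0 -h.
Qed.

Lemma lhD {f} : lie_hom brV brW f -> forall a b, f (a + b) = f a + f b.
Proof. by move=> [hl _] a b; have := hl 1 a b; rewrite !scale1r. Qed.

Lemma lhZ {f} : lie_hom brV brW f -> forall k a, f (k *: a) = k *: f a.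
Proof.
by move=> hf k a; rewrite -[k *: a]addr0 (proj1 hf) (lh0 hf) addr0.
Qed.

Lemma lhS {f} {I : finType} {F : I -> V} : lie_hom brV brW f ->
  f (\sum_i F i) = \sum_i f (F i).
Proof. by move=> hf; apply: big_morph; [exact: lhD | exact: lh0]. Qed.
End LH.

Section W3.
Variable K : fieldType.
Definition i0 : 'I_3 := @Ordinal 3 0 isT.
Definition i1 : 'I_3 := @Ordinal 3 1 isT.
Definition i2 : 'I_3 := @Ordinal 3 2 isT.
Definition j0 : 'I_1 := @Ordinal 1 0 isT.
Definition e (i : 'I_3) : 'rV[K]_3 := delta_mx j0 i.
Definition brW (a b : 'rV[K]_3) : 'rV[K]_3 :=
  (a j0 i0 * b j0 i1 - a j0 i1 * b j0 i0) *: e i2.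

Lemma e2c0 k : (k *: e i2) j0 i0 = 0.
Proof. by rewrite !mxE /= mulr0. Qed.
Lemma e2c1 k : (k *: e i2) j0 i1 = 0.
Proof. by rewrite !mxE /= mulr0. Qed.

Lemma brW2 k b : brW (k *: e i2) b = 0.
Proof. by rewrite /brW e2c0 e2c1 !mul0r subrr scale0r. Qed.
Lemma brW2r k b : brW b (k *: e i2) = 0.
Proof. by rewrite /brW e2c0 e2c1 !mulr0 subrr scale0r. Qed.

Lemma brW0 b : brW 0 b = 0.
Proof. by have := brW2 0 b; rewrite scale0r. Qed.

Lemma lieW : is_lie brW.
Proof.
split.
- move=> k a1 a2 b; rewrite /brW !mxE scalerA -scalerDl; congr (_ *: _); ring.
- move=> k a b1 b2; rewrite /brW !mxE scalerA -scalerDl; congr (_ *: _); ring.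
- by move=> a; rewrite /brW mulrC subrr scale0r.
- by move=> a b c; rewrite !brW2r !addr0.
Qed.

Lemma metW : metabelian brW.
Proof. by move=> a b c d; rewrite brW2. Qed.

Lemma nilW c : (2 <= c)%N -> nilp_class_le brW c.
Proof.
move=> c2 a0 [|s1 [|s2 s]] //= hs; first by rewrite -hs in c2.
  by rewrite -hs in c2.
rewrite brW2; elim: s {hs} => //= t s IH; by rewrite brW0.
Qed.
End W3.

Lemma sum_delta (K : fieldType) n (a : 'I_n -> K) i :
  \sum_k a k * (k == i)%:R = a i.
Proof.
rewrite (bigD1 i) //= eqxx mulr1 big1 ?addr0 // => k /negbTE ->; by rewrite mulr0.
Qed.

Lemma reindex_t (K : fieldType) (V : lmodType K) n (i j : 'I_n) (F : 'I_n -> K)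
  (G : 'I_n -> V) :
  \sum_k F k *: G (tperm i j k) = \sum_k F (tperm i j k) *: G k.
Proof.
rewrite (reindex_inj (@perm_inj _ (tperm i j))) /=.
by apply: eq_bigr => k _; rewrite tpermK.
Qed.

Theorem lemma2p2 (K : fieldType) (n c : nat) (V : lmodType K)
  (br : V -> V -> V) (x : 'I_n -> V) (alpha : 'I_n -> K) :
  [pchar K] =i pred0 -> (2 <= n)%N -> (2 <= c)%N ->
  free_metab_nilp c br x ->
  symmetric_elt br x (br (\sum_(i < n) alpha i *: x i) (\sum_(i < n) x i)) ->
  exists a : K, \sum_(i < n) alpha i *: x i = a *: \sum_(i < n) x i.
Proof.
move=> chK n2 c2 [lieV metV nilV univ] sym.
suff Heq : forall i j, alpha i = alpha j.
  have n0 : (0 < n)%N by apply: leq_trans n2.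
  exists (alpha (Ordinal n0)); rewrite scaler_sumr.
  by apply: eq_bigr => k _; rewrite (Heq k (Ordinal n0)).
move=> i j.
pose pi := tperm i j.
have [[f [hf hfx]] _] := univ V br (fun k => x (pi k)) lieV metV nilV.
have H := sym pi f hf hfx.
have fu : f (\sum_k alpha k *: x k) = \sum_k alpha (pi k) *: x k.
  rewrite (lhS hf) -reindex_t; apply: eq_bigr => k _; by rewrite (lhZ hf) hfx.
have fv : f (\sum_k x k) = \sum_k x k.
  rewrite (lhS hf) (reindex_inj (@perm_inj _ pi)) /=.
  by apply: eq_bigr => k _; rewrite hfx tpermK.
rewrite (proj2 hf) fu fv in H.
pose y k : 'rV[K]_3 := (k == i)%:R *: e K i0 + (k == j)%:R *: e K i1.
have [[g [hg hgx]] _] := univ _ (@brW K) y (lieW K) (metW K) (@nilW K c c2).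
have gS (a : 'I_n -> K) : g (\sum_k a k *: x k) = \sum_k a k *: y k.
  rewrite (lhS hg); apply: eq_bigr => k _; by rewrite (lhZ hg) hgx.
have gv : g (\sum_k x k) = \sum_k y k.
  rewrite (lhS hg); apply: eq_bigr => k _; by rewrite hgx.
have := congr1 g H; rewrite !(proj2 hg) !gS gv.
move=> /(congr1 (fun m : 'rV[K]_3 => m j0 i2)).
have c0 (a : 'I_n -> K) : (\sum_k a k *: y k) j0 i0 = a i.
  rewrite summxE -[RHS](@sum_delta _ _ a _); apply: eq_bigr => k _.
  by rewrite !mxE /= mulr1 mulr0 addr0.
have c1 (a : 'I_n -> K) : (\sum_k a k *: y k) j0 i1 = a j.
  rewrite summxE -[RHS](@sum_delta _ _ a _); apply: eq_bigr => k _.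
  by rewrite !mxE /= mulr1 mulr0 add0r.
have d0 : (\sum_k y k) j0 i0 = 1.
  have -> : \sum_k y k = \sum_k (fun _ => 1) k *: y k.
    by apply: eq_bigr => k _; rewrite scale1r.
  exact: c0.
have d1 : (\sum_k y k) j0 i1 = 1.
  have -> : \sum_k y k = \sum_k (fun _ => 1) k *: y k.
    by apply: eq_bigr => k _; rewrite scale1r.
  exact: c1.
rewrite /brW !mxE /= !mulr1 !c0 !c1 d0 d1 !mulr1 /pi tpermL tpermR => /eqP.
rewrite -subr_eq0 => /eqP h.
have h2 : (2%:R : K) * (alpha i - alpha j) = 0.
  by rewrite -[RHS]oppr0 -h; ring.
move/eqP: h2; rewrite mulf_eq0 => /orP [].
  by move/pcharf0P: chK => ->.
by rewrite subr_eq0 => /eqP.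
Qed.
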